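(* Let $\epsilon \in (0, 1/2]$ and consider the stochastic process $X_0 = 0$ and, for $t \ge 1$, $X_t = X_{t-1} + x_t - \left(\frac{1}{2} + \epsilon\cdot \mathrm{sgn}(X_{t-1})\right)$, where $x_1, x_2, \ldots$ are independent $\mathrm{Bernoulli}(1/2)$ random variables. Then for every integer $t \ge 0$ and every $\Delta \ge 0$, $\Pr[|X_t| \ge \Delta] \le e^{1/2}\cdot e^{-\epsilon\Delta}$.
   Context: $\mathrm{sgn}(0) = 0$, $\mathrm{sgn}(y)=1$ for $y>0$, $\mathrm{sgn}(y) = -1$ for $y<0$. *)

(* Defs.v *)
From HB Require Import structures.
From mathcomp Require Import all_boot all_order all_algebra.
From mathcomp Require Import all_classical all_reals all_analysis.
Set Implicit Arguments. Unset Strict Implicit. Unset Printing Implicit Defensive.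
Import Order.TTheory GRing.Theory Num.Theory.
Local Open Scope ring_scope.

(* The process driven by the coin flips s = [:: x_1; ...; x_t] (x_i in {0,1}):
   X_0 = 0, X_k = X_{k-1} + x_k - (1/2 + eps * sgn X_{k-1}).
   Num.sg is the sign function with sg 0 = 0. *)
Definition Xproc (R : realType) (eps : R) (s : seq bool) : R :=
  foldl (fun X (b : bool) => X + (b : nat)%:R - (2^-1 + eps * Num.sg X)) 0 s.

(* Pr[|X_t| >= Delta] when x_1, ..., x_t are independent Bernoulli(1/2):
   the law of (x_1,...,x_t) is uniform on {0,1}^t = t.-tuple bool. *)
Definition prob_absX_ge (R : realType) (eps : R) (t : nat) (Delta : R) : R :=
  #|[set s : t.-tuple bool | Delta <= `|Xproc eps s|]|%:R
  / #|{: t.-tuple bool}|%:R.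

(* Main.v *)
Require Import Defs.
From mathcomp Require Import all_boot all_order all_algebra.
From mathcomp Require Import all_classical all_reals all_analysis.
From mathcomp Require Import lra ring.
Import Order.TTheory GRing.Theory Num.Theory.
Local Open Scope ring_scope.

Definition stepX (R : realType) (eps : R) (X : R) (b : bool) : R :=
  X + (b : nat)%:R - (2^-1 + eps * Num.sg X).

Arguments stepX {R}.

Lemma Xproc_rcons (R : realType) (eps : R) s b :
  Xproc eps (rcons s b) = stepX eps (Xproc eps s) b.
Proof. by rewrite /Xproc foldl_rcons. Qed.

Lemma imp_leq (b1 b2 : bool) : (b1 -> b2) -> (b1 <= b2)%N.
Proof. by case: b1; case: b2 => // /(_ isT). Qed.

Lemma ptw (R : realType) (eps : R) (x h : R) : 0 < eps -> 2^-1 + eps <= h ->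
  (((h <= `|stepX eps x true|)%R : nat) + ((h <= `|stepX eps x false|)%R : nat) <=
   ((h + eps - 2^-1 <= `|x|)%R : nat) + ((h + eps + 2^-1 <= `|x|)%R : nat))%N.
Proof.
move=> e0 hh; rewrite /stepX /=.
case: (ltgtP x 0) => [xlt|xgt|->].
- rewrite ltr0_sg // addnC.
  apply: leq_add; apply: imp_leq; rewrite !ler_normr => /orP[H|H]; apply/orP;
    first [left; lra | right; lra].
- rewrite gtr0_sg //.
  apply: leq_add; apply: imp_leq; rewrite !ler_normr => /orP[H|H]; apply/orP;
    first [left; lra | right; lra].
- rewrite sgr0.
  apply: leq_add; apply: imp_leq; rewrite !ler_normr => /orP[H|H]; apply/orP;
    first [left; lra | right; lra].
Qed.
Definition rct (n : nat) (p : n.-tuple bool * bool) : n.+1.-tuple bool :=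
  [tuple of rcons p.1 p.2].
Definition unrct (n : nat) (u : n.+1.-tuple bool) : n.-tuple bool * bool :=
  ([tuple of belast (thead u) (behead u)], last (thead u) (behead u)).

Arguments rct {n}.
Arguments unrct {n}.

Lemma belast_rcons_gen (s : seq bool) b :
  belast (head b (rcons s b)) (behead (rcons s b)) = s /\
  last (head b (rcons s b)) (behead (rcons s b)) = b.
Proof. by case: s => [|x s] //=; rewrite belast_rcons last_rcons. Qed.

Lemma rct_bij n : bijective (@rct n).
Proof.
exists (@unrct n).
- case=> s b; rewrite /unrct /rct /thead (tnth_nth b) /=.
  have [H1 H2] := belast_rcons_gen s b.
  rewrite -nth0 in H1 H2.
  by congr (_, _) => //; apply: val_inj; rewrite /= H1.
- move=> u; apply: val_inj => /=.
  case: u => [[|x s] Hs] //=.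
  by rewrite /thead (tnth_nth x) /= -lastI.
Qed.

Lemma sum_tupleS n (F : n.+1.-tuple bool -> nat) :
  \sum_(u : n.+1.-tuple bool) F u =
  \sum_(s : n.-tuple bool) (F (rct (s, true)) + F (rct (s, false))).
Proof.
rewrite (reindex (@rct n)); last by apply: onW_bij; apply: rct_bij.
rewrite -(pair_big xpredT xpredT (fun s b => F (rct (s, b)))) /=; apply: eq_bigr => s _.
by rewrite big_bool.
Qed.
Lemma exp_key (R : realType) (eps : R) : 0 < eps -> eps <= 2^-1 ->
  expR (- eps^+2 + eps/2) + expR (- eps^+2 - eps/2) <= 2.
Proof.
move=> e0 e1.
set a := eps / 2.
have a0 : 0 < a by rewrite /a; lra.
have a1 : a <= 4^-1 by rewrite /a; lra.
have he : eps ^+ 2 = 4 * a^+2 by rewrite /a; field.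
rewrite he !expRD.
set z := expR (- (4 * a^+2)).
have hz : z * (1 + 4 * a^+2) <= 1.
  have h1 := expR_ge1Dx (4 * a^+2).
  have h2 : z * expR (4 * a^+2) = 1 by rewrite /z -expRD addNr expR0.
  have z0 : 0 < z := expR_gt0 _.
  nra.
set u := expR a. set v := expR (- a).
have uv : u * v = 1 by rewrite /u /v -expRD addrN expR0.
have hu := expR_ge1Dx a. have hv := expR_ge1Dx (- a).
rewrite -/u -/v in hu hv.
have z0 : 0 < z := expR_gt0 _.
have u0 : 0 < u := expR_gt0 _. have v0 : 0 < v := expR_gt0 _.
have hu2 : u <= 1 + a + 2 * a^+2.
  have : u * (1 - a) <= 1 by nra.
  have : 1 <= (1 - a) * (1 + a + 2 * a^+2) by nra.
  nra.
have hv2 : v <= 1 - a + a^+2.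
  have : v * (1 + a) <= 1 by nra.
  have : 1 <= (1 + a) * (1 - a + a^+2) by nra.
  nra.
have : u + v <= 2 * (1 + 4 * a^+2) by nra.
rewrite -/u -/v; nra.
Qed.

Definition Acnt (R : realType) (eps : R) (t : nat) (h : R) : nat :=
  \sum_(s : t.-tuple bool) ((h <= `|Xproc eps s|)%R : nat).

Arguments Acnt {R}.

Lemma card_Acnt (R : realType) (eps : R) t h :
  #|[set s : t.-tuple bool | h <= `|Xproc eps s|]| = Acnt eps t h.
Proof.
rewrite -sum1_card big_mkcond /Acnt; apply: eq_bigr => s _.
by rewrite inE; case: ifP.
Qed.

Lemma Acnt_le (R : realType) (eps : R) t h : (Acnt eps t h <= 2 ^ t)%N.
Proof.
apply: (@leq_trans (\sum_(s : t.-tuple bool) 1)%N).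
  by apply: leq_sum => s _; case: (_ <= _)%R.
by rewrite sum1_card card_tuple card_bool.
Qed.

Lemma Acnt_step (R : realType) (eps : R) t h : 0 < eps -> 2^-1 + eps <= h ->
  (Acnt eps t.+1 h <= Acnt eps t (h + eps - 2^-1) + Acnt eps t (h + eps + 2^-1))%N.
Proof.
move=> e0 hh; rewrite /Acnt sum_tupleS -big_split /=.
apply: leq_sum => s _.
rewrite /rct /= !Xproc_rcons.
exact: ptw.
Qed.

Lemma Acnt_main (R : realType) (eps : R) : 0 < eps -> eps <= 2^-1 ->
  forall t h, (Acnt eps t h)%:R <= 2 ^+ t * expR (2^-1 - eps * h) :> R.
Proof.
move=> e0 e1; elim=> [|t IH] h.
  have [hle|hgt] := lerP h 0.
    apply: (@le_trans _ _ 1).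
      by rewrite (ler_nat R _ 1) (@Acnt_le R eps 0 h).
    rewrite expr0 mul1r; apply: le_trans (expR_ge1Dx _); nra.
  rewrite /Acnt big1 ?mulr0n ?mulr_ge0 ?expR_ge0 // => s _.
  rewrite (tuple0 s) /= /Xproc /= normr0.
  by have -> : (h <= 0) = false by apply/negbTE; rewrite -ltNge.
have [small|big] := lerP (eps * h) (2^-1).
  apply: (@le_trans _ _ (2 ^+ t.+1)).
    by rewrite -natrX ler_nat (@Acnt_le R eps t.+1 h).
  rewrite -[X in X <= _]mulr1 ler_wpM2l ?exprn_ge0 //.
  apply: le_trans (expR_ge1Dx _); lra.
have hh : 2^-1 + eps <= h by nra.
apply: (@le_trans _ _ (Acnt eps t (h + eps - 2^-1) + Acnt eps t (h + eps + 2^-1))%:R).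
  by rewrite ler_nat; apply: Acnt_step.
rewrite natrD.
apply: le_trans; first by apply: lerD; apply: IH.
have E1 : 2^-1 - eps * (h + eps - 2^-1) = (2^-1 - eps * h) + (- eps^+2 + eps/2).
  by field.
have E2 : 2^-1 - eps * (h + eps + 2^-1) = (2^-1 - eps * h) + (- eps^+2 - eps/2).
  by field.
rewrite E1 E2 !expRD exprS.
have key := @exp_key R eps e0 e1.
have P0 : 0 <= 2 ^+ t :> R by rewrite exprn_ge0.
have E0 : 0 <= expR (2^-1 - eps * h) by rewrite expR_ge0.
set P := 2 ^+ t; set E := expR (2^-1 - eps * h).
set a1 := expR (- eps^+2 + eps/2); set a2 := expR (- eps^+2 - eps/2).
rewrite /a1 /a2 !expRD in key.
set b1 := expR (- eps^+2) * expR (eps/2) in key *.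
set b2 := expR (- eps^+2) * expR (- (eps/2)) in key *.
have F0 : 0 <= expR 2^-1 * expR (- (eps * h)) by rewrite mulr_ge0 ?expR_ge0.
set F := expR 2^-1 * expR (- (eps * h)) in F0 *.
rewrite exprS -/P.
have PF : 0 <= P * F by rewrite mulr_ge0.
nra.
Qed.

Theorem lemma7 (R : realType) (eps : R) (heps0 : 0 < eps) (heps1 : eps <= 2^-1)
  (t : nat) (Delta : R) (hDelta : 0 <= Delta) :
  prob_absX_ge eps t Delta <= expR (2^-1) * expR (- (eps * Delta)).
Proof.
rewrite /prob_absX_ge card_Acnt card_tuple card_bool natrX.
rewrite ler_pdivrMr ?exprn_gt0 // -expRD mulrC.
exact: Acnt_main.
Qed.
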